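(* Let $\gamma>0$, $s\in(0,q^{-1/2})$, $h\in\mathcal M_s$, and let $g\in\mathcal I^\infty_\gamma$ be such that the series $\mu_\gamma(g)(t)$ converges absolutely for all $|t|\le(1-q)^{-1}q^{-1/2}s^{-1}$. Then $g*_\gamma h$ is a well-defined function and belongs to $\mathcal M_s$.
   Context: Fix $q\in(0,1)$. Notation: $(a;q)_k=\prod_{j=0}^{k-1}(1-aq^j)$, $(a;q)_\infty=\lim_k(a;q)_k$, $[k]_q!=(q;q)_k/(1-q)^k$, $e_q(x)=1/(x;q)_\infty$. The $q$-derivative is $(\partial f)(x)=\frac{f(x)-f(qx)}{(1-q)x}$ (extended to $x=0$ by continuity for $f$ holomorphic near $0$). For $\gamma>0$, $L(\gamma)=\{\pm q^k\gamma:k\in\mathbb Z\}$ and $\int_\gamma f=(1-q)\sum_{k\in\mathbb Z}\sum_{\epsilon=\pm1}q^k\gamma f(\epsilon q^k\gamma)$ whenever absolutely convergent. $\mathcal I^\infty_\gamma$ is the set of functions $f$ on $L(\gamma)$ with $\int_\gamma|f(x)x^e|<\infty$ for all integers $e\ge0$. Moments: $\mu_{e,\gamma}(f)=q^{(e^2+e)/2}\int_\gamma f(x)x^e$. The $q$-moment series is $\mu_\gamma(f)(t)=\sum_{k\ge0}\mu_{k,\gamma}(f)t^k/[k]_q!$. The $q$-convolution of $f\in\mathcal I^\infty_\gamma$ with $g$ is $(f*_\gamma g)(x)=\sum_{e\ge0}\frac{(-1)^e\mu_{e,\gamma}(f)}{[e]_q!}(\partial^eg)(x)$ at all $x$ where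 the $q$-derivatives are defined and the series converges absolutely. For $s>0$, $\mathcal M_s$ is the set of functions $F(x)=f(x)e_{q^2}(-x^2)$ (holomorphic on $|\mathrm{Im}\,x|<1$) where $f(x)=\sum_{l\ge0}a_lx^l$ with $|a_l|\le Cs^lq^{l^2/2}$ for all $l$, for some $C>0$. *)

(* Defs.v *)
From Stdlib Require Import Reals ZArith.
From Coquelicot Require Import Coquelicot.
Open Scope R_scope.

Definition Clim (u : nat -> C) : C :=
  (real (Lim_seq (fun n => Re (u n))), real (Lim_seq (fun n => Im (u n)))).

(* sum of a complex series (meaningful when it converges) *)
Definition Csum (a : nat -> C) : C :=
  Clim (fun n => sum_n a n).

Fixpoint qpochR (a q : R) (k : nat) : R :=
  match k with O => 1 | S k' => qpochR a q k' * (1 - a * q ^ k') end.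
Fixpoint qpochC (a : C) (q : R) (k : nat) : C :=
  match k with O => RtoC 1 | S k' => Cmult (qpochC a q k') (Cminus (RtoC 1) (Cmult a (RtoC (q ^ k')))) end.

Definition qpoch_inf (a : C) (q : R) : C := Clim (qpochC a q).
Definition e_q (q : R) (x : C) : C := Cinv (qpoch_inf x q).

Definition qfact (q : R) (k : nat) : R := qpochR q q k / (1 - q) ^ k.

(* q-difference quotient and q-derivative, extended to 0 by continuity *)
Definition qdiffquot (q : R) (f : C -> C) (x : C) : C :=
  Cdiv (Cminus (f x) (f (Cmult (RtoC q) x))) (Cmult (RtoC (1 - q)) x).
Definition qderiv (q : R) (f : C -> C) (x : C) : C :=
  match Req_EM_T (Re x) 0, Req_EM_T (Im x) 0 with
  | left _, left _ => @lim C_CompleteNormedModule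
                         (filtermap (qdiffquot q f) (@locally' C_UniformSpace (RtoC 0)))
  | _, _ => qdiffquot q f x
  end.
Definition qderiv_n (q : R) (n : nat) (f : C -> C) : C -> C :=
  Nat.iter n (qderiv q) f.

(* Points of the lattice L(gamma): q^k gamma, k in Z, split into k = n >= 0 and k = -(n+1) *)
Definition kpos (n : nat) : Z := Z.of_nat n.
Definition kneg (n : nat) : Z := (- Z.of_nat (S n))%Z.

Definition qint_abs_conv (q gamma : R) (f : R -> C) : Prop :=
  ex_series (fun n => powerRZ q (kpos n) * gamma *
      (Cmod (f (powerRZ q (kpos n) * gamma)) + Cmod (f (- (powerRZ q (kpos n) * gamma))))) /\
  ex_series (fun n => powerRZ q (kneg n) * gamma *
      (Cmod (f (powerRZ q (kneg n) * gamma)) + Cmod (f (- (powerRZ q (kneg n) * gamma))))).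

(* int_gamma f = (1-q) sum_{k in Z} sum_{eps = +-1} q^k gamma f(eps q^k gamma) *)
Definition qint (q gamma : R) (f : R -> C) : C :=
  Cmult (RtoC (1 - q))
   (Cplus
     (Csum (fun n => Cmult (RtoC (powerRZ q (kpos n) * gamma))
        (Cplus (f (powerRZ q (kpos n) * gamma)) (f (- (powerRZ q (kpos n) * gamma))))))
     (Csum (fun n => Cmult (RtoC (powerRZ q (kneg n) * gamma))
        (Cplus (f (powerRZ q (kneg n) * gamma)) (f (- (powerRZ q (kneg n) * gamma))))))).

Definition in_Iinf (q gamma : R) (g : R -> C) : Prop :=
  forall e : nat, qint_abs_conv q gamma (fun x => Cmult (g x) (Cpow (RtoC x) e)).

Definition qmoment (q gamma : R) (g : R -> C) (e : nat) : C :=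
  Cmult (RtoC (q ^ ((e * e + e) / 2)))
        (qint q gamma (fun x => Cmult (g x) (Cpow (RtoC x) e))).

Definition qmoment_series_term (q gamma : R) (g : R -> C) (t : C) (k : nat) : C :=
  Cdiv (Cmult (qmoment q gamma g k) (Cpow t k)) (RtoC (qfact q k)).

Definition qconv_term (q gamma : R) (g : R -> C) (h : C -> C) (x : C) (e : nat) : C :=
  Cmult (Cdiv (Cmult (RtoC ((-1) ^ e)) (qmoment q gamma g e)) (RtoC (qfact q e)))
        (qderiv_n q e h x).

Definition qconv (q gamma : R) (g : R -> C) (h : C -> C) (x : C) : C :=
  Csum (qconv_term q gamma g h x).

Definition in_strip (x : C) : Prop := Rabs (Im x) < 1.

Definition in_Ms (q s : R) (F : C -> C) : Prop :=
  exists (a : nat -> C) (Cst : R), 0 < Cst /\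
    (forall l : nat, Cmod (a l) <= Cst * s ^ l * Rpower q (INR (l * l) / 2)) /\
    (forall x : C, in_strip x ->
       F x = Cmult (Csum (fun l => Cmult (a l) (Cpow x l)))
                   (e_q (q ^ 2) (Copp (Cmult x x)))).

(* Main.v *)
Require Import Defs.
From Stdlib Require Import Reals Lra Lia FunctionalExtensionality.
From Coquelicot Require Import Coquelicot.
Open Scope R_scope.

Lemma ball_of_norm (x y : C) (eps : R) : Cmod (Cminus y x) < eps -> @ball C_UniformSpace x eps y.
Proof. intros H. exact (@norm_compat1 C_AbsRing C_NormedModule x y eps H). Qed.

Lemma norm_of_ball (x y : C) (eps : posreal) : @ball C_UniformSpace x eps y -> Cmod (Cminus y x) < sqrt 2 * eps.
Proof. intros H. exact (@norm_compat2 C_AbsRing C_NormedModule x y eps H). Qed.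

Lemma Clim_lim (u : nat -> C) (L : C) : filterlim u eventually (locally L) -> Clim u = L.
Proof.
  intros H. unfold Clim.
  assert (HR : is_lim_seq (fun n => Re (u n)) (Re L)).
  { apply is_lim_seq_spec. intros eps.
    generalize (proj1 (filterlim_locally _ _) H eps). apply filter_imp.
    intros n [H1 H2]. exact H1. }
  assert (HI : is_lim_seq (fun n => Im (u n)) (Im L)).
  { apply is_lim_seq_spec. intros eps.
    generalize (proj1 (filterlim_locally _ _) H eps). apply filter_imp.
    intros n [H1 H2]. exact H2. }
  rewrite (is_lim_seq_unique _ _ HR), (is_lim_seq_unique _ _ HI). simpl.
  destruct L; reflexivity.
Qed.

Lemma Csum_is (a : nat -> C) (L : C) : is_series a L -> Csum a = L.
Proof. intros H. unfold Csum. apply Clim_lim. exact H. Qed.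

Lemma conv_norm (u : nat -> C) (L : C) (B : nat -> R) :
  (forall n, Cmod (Cminus (u n) L) <= B n) -> is_lim_seq B 0 -> filterlim u eventually (locally L).
Proof.
  intros H HB. apply (proj2 (filterlim_locally _ _)). intros eps.
  generalize (proj2 (is_lim_seq_spec _ _) HB eps). apply filter_imp.
  intros n Hn. apply ball_of_norm. specialize (H n).
  rewrite Rminus_0_r in Hn.
  apply Rle_lt_trans with (1 := H). apply Rle_lt_trans with (2 := Hn). apply Rle_abs.
Qed.

Lemma closed_bound (u : nat -> C) (L : C) (v : nat -> R) (B : R) :
  filterlim u eventually (locally L) -> is_lim_seq v B -> (forall n, Cmod (u n) <= v n) -> Cmod L <= B.
Proof.
  intros Hu Hv H. destruct (Rle_lt_dec (Cmod L) B) as [|Hlt]; [assumption|exfalso].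
  set (d := (Cmod L - B) / 4).
  assert (Hd : 0 < d) by (unfold d; lra).
  assert (Hs : sqrt 2 < 2).
  { assert (sqrt 2 * sqrt 2 = 2) by (apply sqrt_sqrt; lra).
    assert (0 <= sqrt 2) by apply sqrt_pos. nra. }
  destruct (filter_and _ _ (proj1 (filterlim_locally _ _) Hu (mkposreal d Hd))
     (proj2 (is_lim_seq_spec _ _) Hv (mkposreal d Hd))) as [N HN].
  destruct (HN N (Nat.le_refl _)) as [H1 H2].
  apply norm_of_ball in H1. simpl in H1.
  simpl in H2.
  specialize (H N).
  assert (Cmod L <= Cmod (u N) + Cmod (Cminus L (u N))).
  { replace L with (Cplus (u N) (Cminus L (u N))) at 1 by (unfold Cminus; ring).
    apply Cmod_triangle. }
  assert (Cmod (Cminus L (u N)) = Cmod (Cminus (u N) L)).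
  { replace (Cminus L (u N)) with (Copp (Cminus (u N) L)) by (unfold Cminus; ring).
    apply Cmod_opp. }
  apply Rabs_def2 in H2. destruct H2.
  assert (sqrt 2 * d <= 2 * d) by nra. unfold d in *. lra.
Qed.

Lemma series_norm (a : nat -> C) (L : C) (b : nat -> R) (B : R) :
  is_series a L -> is_series b B -> (forall n, Cmod (a n) <= b n) -> Cmod L <= B.
Proof.
  intros Ha Hb H. apply (closed_bound (sum_n a) L (sum_n b) B Ha Hb).
  intros n. induction n.
  - rewrite !sum_O. apply H.
  - rewrite !sum_Sn. apply Rle_trans with (1 := Cmod_triangle _ _).
    change (Cmod (sum_n a n) + Cmod (a (S n)) <= sum_n b n + b (S n)).
    specialize (H (S n)). lra.
Qed.

Lemma ex_series_C_le (a : nat -> C) (b : nat -> R) :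
  (forall n, Cmod (a n) <= b n) -> ex_series b -> ex_series a.
Proof. intros H Hb. exact (@ex_series_le C_AbsRing C_CompleteNormedModule a b H Hb). Qed.

Lemma ex_is_Csum (a : nat -> C) : ex_series a -> is_series a (Csum a).
Proof. intros [L HL]. rewrite (Csum_is a L HL). exact HL. Qed.

Lemma exp_le (x y : R) : x <= y -> exp x <= exp y.
Proof. intros [H|H]. left; apply exp_increasing; exact H. subst; lra. Qed.

Lemma exp_pos' (x : R) : 0 < exp x. Proof. apply exp_pos. Qed.

Lemma lim_norm0 (v : nat -> C) (L : C) : filterlim v eventually (locally L) ->
  is_lim_seq (fun n => Cmod (Cminus (v n) L)) 0.
Proof.
  intros H. apply is_lim_seq_spec. intros eps.
  assert (Hs : 0 < sqrt 2) by (apply sqrt_lt_R0; lra).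
  assert (He : 0 < eps / sqrt 2) by (apply Rdiv_lt_0_compat; [apply cond_pos|exact Hs]).
  generalize (proj1 (filterlim_locally _ _) H (mkposreal _ He)). apply filter_imp.
  intros n Hn. apply norm_of_ball in Hn. simpl in Hn.
  rewrite Rminus_0_r, Rabs_pos_eq by apply Cmod_ge_0.
  replace (sqrt 2 * (eps / sqrt 2)) with (pos eps) in Hn by (field; lra). exact Hn.
Qed.

Lemma filterlim_scal_C (v : nat -> C) (L c : C) : filterlim v eventually (locally L) ->
  filterlim (fun n => Cmult c (v n)) eventually (locally (Cmult c L)).
Proof.
  intros H. apply conv_norm with (B := fun n => Cmod c * Cmod (Cminus (v n) L)).
  - intros n. replace (Cminus (Cmult c (v n)) (Cmult c L)) with (Cmult c (Cminus (v n) L))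
      by (unfold Cminus; ring). rewrite Cmod_mult. lra.
  - replace 0 with (Cmod c * 0) by ring. apply (is_lim_seq_scal_l _ (Cmod c) 0). apply lim_norm0; exact H.
Qed.

Lemma filterlim_shift (v : nat -> C) (L : C) : filterlim (fun n => v (S n)) eventually (locally L) ->
  filterlim v eventually (locally L).
Proof.
  intros H. apply (proj2 (filterlim_locally _ _)). intros eps.
  destruct (proj1 (filterlim_locally _ _) H eps) as [N HN]. exists (S N).
  intros n Hn. destruct n as [|m]; [lia|]. apply HN. lia.
Qed.

Lemma filterlim_shift_inv (v : nat -> C) (L : C) : filterlim v eventually (locally L) ->
  filterlim (fun n => v (S n)) eventually (locally L).
Proof.
  intros H. apply (proj2 (filterlim_locally _ _)). intros eps.
  destruct (proj1 (filterlim_locally _ _) H eps) as [N HN]. exists N.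
  intros n Hn. apply HN. lia.
Qed.

Lemma qpochC_S (w : C) (p : R) (n : nat) :
  qpochC w p (S n) = Cmult (qpochC w p n) (Cminus (RtoC 1) (Cmult w (RtoC (p ^ n)))).
Proof. reflexivity. Qed.

Lemma qpoch_bound (w : C) (p : R) (n : nat) : 0 < p < 1 ->
  Cmod (Cminus (qpochC w p n) (RtoC 1)) <= exp (Cmod w * (1 - p ^ n) / (1 - p)) - 1.
Proof.
  intros Hp. induction n.
  - simpl. replace (Cminus (RtoC 1) (RtoC 1)) with (RtoC 0) by (unfold Cminus; ring).
    rewrite Cmod_0. replace (Cmod w * (1 - 1) / (1 - p)) with 0 by (field; lra). rewrite exp_0. lra.
  - rewrite qpochC_S.
    set (u := qpochC w p n) in *.
    set (z := Cmult w (RtoC (p ^ n))).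
    assert (Hz : Cmod z = Cmod w * p ^ n).
    { unfold z. rewrite Cmod_mult, Cmod_R, Rabs_pos_eq. ring. apply pow_le; lra. }
    replace (Cminus (Cmult u (Cminus (RtoC 1) z)) (RtoC 1))
      with (Cminus (Cmult (Cminus u (RtoC 1)) (Cminus (RtoC 1) z)) z) by (unfold Cminus; ring).
    assert (H1 : Cmod (Cminus (RtoC 1) z) <= 1 + Cmod z).
    { unfold Cminus. eapply Rle_trans; [apply Cmod_triangle|]. rewrite Cmod_opp, Cmod_1. lra. }
    assert (H2 : Cmod (Cminus (Cmult (Cminus u (RtoC 1)) (Cminus (RtoC 1) z)) z) <=
              Cmod (Cminus u (RtoC 1)) * (1 + Cmod z) + Cmod z).
    { unfold Cminus at 1. eapply Rle_trans; [apply Cmod_triangle|]. rewrite Cmod_opp, Cmod_mult.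
      apply Rplus_le_compat_r. apply Rmult_le_compat_l; [apply Cmod_ge_0|exact H1]. }
    set (A := Cmod w * (1 - p ^ n) / (1 - p)) in *.
    assert (HA : A + Cmod z = Cmod w * (1 - p ^ S n) / (1 - p)).
    { unfold A. rewrite Hz. simpl. field. lra. }
    rewrite <- HA. rewrite exp_plus.
    assert (H3 : 1 + Cmod z <= exp (Cmod z)) by (generalize (exp_ineq1_le (Cmod z)); lra).
    assert (0 <= Cmod z) by apply Cmod_ge_0.
    assert (0 < exp A) by apply exp_pos.
    assert (Cmod (Cminus u (RtoC 1)) * (1 + Cmod z) <= (exp A - 1) * (1 + Cmod z)).
    { apply Rmult_le_compat_r; lra. }
    assert ((exp A) * (1 + Cmod z) <= exp A * exp (Cmod z)) by (apply Rmult_le_compat_l; lra).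
    nra.
Qed.

Lemma qpoch_bound2 (w : C) (p : R) (n : nat) : 0 < p < 1 ->
  Cmod (Cminus (qpochC w p n) (RtoC 1)) <= exp (Cmod w / (1 - p)) - 1.
Proof.
  intros Hp. eapply Rle_trans; [apply qpoch_bound; exact Hp|].
  apply Rplus_le_compat_r. apply exp_le.
  assert (0 < p ^ n) by (apply pow_lt; lra). assert (0 <= Cmod w) by apply Cmod_ge_0.
  unfold Rdiv. apply Rmult_le_compat_r. left; apply Rinv_0_lt_compat; lra. nra.
Qed.

Lemma qpoch_norm (w : C) (p : R) (n : nat) : 0 < p < 1 ->
  Cmod (qpochC w p n) <= exp (Cmod w / (1 - p)).
Proof.
  intros Hp. generalize (qpoch_bound2 w p n Hp). intros H.
  replace (qpochC w p n) with (Cplus (Cminus (qpochC w p n) (RtoC 1)) (RtoC 1)) by (unfold Cminus; ring).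
  eapply Rle_trans; [apply Cmod_triangle|]. rewrite Cmod_1. lra.
Qed.

Lemma sum_n_telescope (u : nat -> C) (n : nat) :
  sum_n (fun k => Cminus (u (S k)) (u k)) n = Cminus (u (S n)) (u O).
Proof.
  induction n.
  - rewrite sum_O. reflexivity.
  - rewrite sum_Sn, IHn. change (Cplus (Cminus (u (S n)) (u O)) (Cminus (u (S (S n))) (u (S n))) =
      Cminus (u (S (S n))) (u O)). unfold Cminus. ring.
Qed.

Lemma qpoch_conv (w : C) (p : R) : 0 < p < 1 ->
  filterlim (qpochC w p) eventually (locally (qpoch_inf w p)).
Proof.
  intros Hp.
  set (d := fun k => Cminus (qpochC w p (S k)) (qpochC w p k)).
  assert (Hd : ex_series d).
  { apply ex_series_C_le with (b := fun n => exp (Cmod w / (1 - p)) * Cmod w * p ^ n).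
    - intros n. unfold d. rewrite qpochC_S.
      replace (Cminus (Cmult (qpochC w p n) (Cminus (RtoC 1) (Cmult w (RtoC (p ^ n))))) (qpochC w p n))
        with (Copp (Cmult (qpochC w p n) (Cmult w (RtoC (p ^ n))))) by (unfold Cminus; ring).
      rewrite Cmod_opp, !Cmod_mult, Cmod_R, Rabs_pos_eq by (apply pow_le; lra).
      generalize (qpoch_norm w p n Hp). assert (0 <= Cmod w) by apply Cmod_ge_0.
      assert (0 <= p ^ n) by (apply pow_le; lra). intros. 
      rewrite <- Rmult_assoc. apply Rmult_le_compat_r; auto. apply Rmult_le_compat_r; auto.
    - apply (@ex_series_scal_l R_AbsRing R_NormedModule (exp (Cmod w / (1 - p)) * Cmod w) (fun n => p ^ n)). apply ex_series_geom. rewrite Rabs_pos_eq; lra. }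
  destruct Hd as [D HD].
  assert (Hlim : filterlim (qpochC w p) eventually (locally (Cplus D (RtoC 1)))).
  { apply filterlim_shift.
    apply (filterlim_ext (fun n => Cplus (sum_n d n) (RtoC 1))).
    - intros n. unfold d. rewrite sum_n_telescope. simpl. unfold Cminus. ring.
    - apply conv_norm with (B := fun n => Cmod (Cminus (sum_n d n) D)).
      + intros n. right. f_equal. unfold Cminus. ring.
      + apply lim_norm0. exact HD. }
  unfold qpoch_inf. rewrite (Clim_lim _ _ Hlim). exact Hlim.
Qed.

Lemma qpochC_shift (w : C) (p : R) (n : nat) :
  qpochC w p (S n) = Cmult (Cminus (RtoC 1) w) (qpochC (Cmult (RtoC p) w) p n).
Proof.
  induction n.
  - simpl. unfold Cminus. ring.
  - rewrite qpochC_S, IHn, (qpochC_S (Cmult (RtoC p) w)). change (p ^ S n) with (p * p ^ n). rewrite RtoC_mult. unfold Cminus. ring.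
Qed.

Lemma qpoch_inf_rel (w : C) (p : R) : 0 < p < 1 ->
  qpoch_inf w p = Cmult (Cminus (RtoC 1) w) (qpoch_inf (Cmult (RtoC p) w) p).
Proof.
  intros Hp.
  assert (H : filterlim (qpochC w p) eventually
       (locally (Cmult (Cminus (RtoC 1) w) (qpoch_inf (Cmult (RtoC p) w) p)))).
  { apply filterlim_shift. apply (filterlim_ext (fun n => Cmult (Cminus (RtoC 1) w) (qpochC (Cmult (RtoC p) w) p n))).
    - intros n. rewrite qpochC_shift. reflexivity.
    - apply filterlim_scal_C. apply qpoch_conv; exact Hp. }
  unfold qpoch_inf at 1. apply Clim_lim. exact H.
Qed.

Lemma qpoch_inf_bound (w : C) (p : R) : 0 < p < 1 ->
  Cmod (Cminus (qpoch_inf w p) (RtoC 1)) <= exp (Cmod w / (1 - p)) - 1.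
Proof.
  intros Hp. apply (closed_bound (fun n => Cminus (qpochC w p n) (RtoC 1)) _ (fun _ => exp (Cmod w / (1 - p)) - 1)).
  - apply conv_norm with (B := fun n => Cmod (Cminus (qpochC w p n) (qpoch_inf w p))).
    + intros n. right. f_equal. unfold Cminus. ring.
    + apply lim_norm0. apply qpoch_conv; exact Hp.
  - apply is_lim_seq_const.
  - intros n. apply qpoch_bound2; exact Hp.
Qed.

Definition EE (q : R) (y : C) : C := e_q (q ^ 2) (Copp (Cmult y y)).

Lemma Cinv_0' : Cinv (RtoC 0) = RtoC 0.
Proof. unfold Cinv, RtoC. simpl. f_equal; unfold Rdiv; ring. Qed.

Lemma Cinv_mult_gen (a b : C) : a <> RtoC 0 -> Cinv (Cmult a b) = Cmult (Cinv a) (Cinv b).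
Proof.
  intros Ha. destruct (Ceq_dec b (RtoC 0)) as [Hb|Hb].
  - subst. rewrite Cmult_0_r, Cinv_0'. ring.
  - field. split; assumption.
Qed.

Lemma EE_rel (q : R) (y : C) : 0 < q < 1 -> Cplus (RtoC 1) (Cmult y y) <> RtoC 0 ->
  EE q (Cmult (RtoC q) y) = Cmult (Cplus (RtoC 1) (Cmult y y)) (EE q y).
Proof.
  intros Hq Hy. unfold EE, e_q.
  assert (Hp : 0 < q ^ 2 < 1) by (split; nra).
  rewrite (qpoch_inf_rel (Copp (Cmult y y)) (q ^ 2) Hp).
  replace (Cminus (RtoC 1) (Copp (Cmult y y))) with (Cplus (RtoC 1) (Cmult y y)) by (unfold Cminus; ring).
  replace (Cmult (RtoC (q ^ 2)) (Copp (Cmult y y))) with (Copp (Cmult (Cmult (RtoC q) y) (Cmult (RtoC q) y))).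
  2:{ simpl. rewrite !RtoC_mult. ring. }
  rewrite Cinv_mult_gen by exact Hy. set (P := qpoch_inf _ _). set (Y := Cplus (RtoC 1) (Cmult y y)) in *. replace (Cmult Y (Cmult (Cinv Y) (Cinv P))) with (Cmult (Cmult Y (Cinv Y)) (Cinv P)) by ring. rewrite Cinv_r by exact Hy. ring.
Qed.

Lemma EE_bound (q : R) (y : C) : 0 < q < 1 -> Cmod y <= 1 ->
  Cmod (Cminus (qpoch_inf (Copp (Cmult y y)) (q ^ 2)) (RtoC 1)) <= exp (Cmod y / (1 - q ^ 2)) - 1.
Proof.
  intros Hq Hy. assert (Hp : 0 < q ^ 2 < 1) by (split; nra).
  eapply Rle_trans; [apply qpoch_inf_bound; exact Hp|].
  apply Rplus_le_compat_r. apply exp_le. rewrite Cmod_opp, Cmod_mult.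
  unfold Rdiv. apply Rmult_le_compat_r. left; apply Rinv_0_lt_compat; lra.
  assert (0 <= Cmod y) by apply Cmod_ge_0. nra.
Qed.

Lemma EE0 (q : R) : 0 < q < 1 -> EE q (RtoC 0) = RtoC 1.
Proof.
  intros Hq. generalize (EE_bound q (RtoC 0) Hq). rewrite Cmod_0. intros H.
  assert (H' : Cmod (Cminus (qpoch_inf (Copp (Cmult (RtoC 0) (RtoC 0))) (q ^ 2)) (RtoC 1)) <= 0).
  { assert (E : exp (0 / (1 - q ^ 2)) - 1 = 0).
    { replace (0 / (1 - q ^ 2)) with 0 by (field; nra). rewrite exp_0. ring. }
    rewrite E in H. apply H; lra. }
  assert (H0 : Cminus (qpoch_inf (Copp (Cmult (RtoC 0) (RtoC 0))) (q ^ 2)) (RtoC 1) = RtoC 0).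
  { apply Cmod_eq_0. generalize (Cmod_ge_0 (Cminus (qpoch_inf (Copp (Cmult (RtoC 0) (RtoC 0))) (q ^ 2)) (RtoC 1))). lra. }
  unfold EE, e_q. replace (qpoch_inf (Copp (Cmult (RtoC 0) (RtoC 0))) (q ^ 2)) with (RtoC 1).
  - unfold Cinv, RtoC; simpl. apply injective_projections; simpl; field.
  - replace (qpoch_inf (Copp (Cmult (RtoC 0) (RtoC 0))) (q ^ 2)) with
       (Cplus (Cminus (qpoch_inf (Copp (Cmult (RtoC 0) (RtoC 0))) (q ^ 2)) (RtoC 1)) (RtoC 1)) by (unfold Cminus; ring).
    rewrite H0. ring.
Qed.

Lemma exp_m1_le (t : R) : 0 <= t <= 1 -> exp t - 1 <= 3 * t.
Proof.
  intros Ht. generalize (exp_ineq1_le (- t)). intros H1.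
  assert (H2 : exp t * exp (- t) = 1) by (rewrite <- exp_plus; replace (t + - t) with 0 by ring; apply exp_0).
  assert (H3 : exp t <= 3) by (eapply Rle_trans; [apply exp_le; apply Ht|apply exp_le_3]).
  assert (0 < exp t) by apply exp_pos.
  assert (exp t - 1 <= t * exp t) by nra. nra.
Qed.

Lemma Cinv_near1 (z : C) : Cmod (Cminus z (RtoC 1)) <= / 2 ->
  Cmod (Cminus (Cinv z) (RtoC 1)) <= 2 * Cmod (Cminus z (RtoC 1)).
Proof.
  intros H.
  assert (Hz : / 2 <= Cmod z).
  { assert (Cmod (RtoC 1) <= Cmod z + Cmod (Cminus z (RtoC 1))).
    { replace (RtoC 1) with (Cplus z (Copp (Cminus z (RtoC 1)))) at 1 by (unfold Cminus; ring).
      eapply Rle_trans; [apply Cmod_triangle|]. rewrite Cmod_opp. lra. }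
    rewrite Cmod_1 in H0. lra. }
  assert (Hz0 : z <> RtoC 0).
  { intros E. rewrite E, Cmod_0 in Hz. lra. }
  replace (Cminus (Cinv z) (RtoC 1)) with (Cmult (Copp (Cminus z (RtoC 1))) (Cinv z)) by (field; exact Hz0).
  rewrite Cmod_mult, Cmod_opp, Cmod_inv by exact Hz0.
  assert (0 <= Cmod (Cminus z (RtoC 1))) by apply Cmod_ge_0.
  assert (/ Cmod z <= 2).
  { replace 2 with (/ / 2) by (field). apply Rinv_le_contravar; lra. }
  nra.
Qed.

Lemma EE_near (q : R) (y : C) : 0 < q < 1 -> Cmod y <= (1 - q ^ 2) / 6 ->
  Cmod (Cminus (EE q y) (RtoC 1)) <= 6 / (1 - q ^ 2) * Cmod y.
Proof.
  intros Hq Hy. assert (Hp : 0 < q ^ 2 < 1) by (split; nra).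
  assert (Hy0 : 0 <= Cmod y) by apply Cmod_ge_0.
  assert (Hy1 : Cmod y <= 1) by (eapply Rle_trans; [exact Hy|]; lra).
  generalize (EE_bound q y Hq Hy1). intros H.
  assert (Ht : 0 <= Cmod y / (1 - q ^ 2) <= 1).
  { split. apply Rdiv_le_0_compat; lra. apply Rmult_le_reg_r with (1 - q ^ 2). lra.
    unfold Rdiv. rewrite Rmult_assoc, Rinv_l by lra. lra. }
  generalize (exp_m1_le _ Ht). intros H2.
  assert (H3 : 3 * (Cmod y / (1 - q ^ 2)) <= / 2).
  { apply Rmult_le_reg_r with (1 - q ^ 2). lra.
    unfold Rdiv. rewrite Rmult_assoc, Rmult_assoc, Rinv_l by lra. lra. }
  unfold EE, e_q. eapply Rle_trans; [apply Cinv_near1; lra|].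
  replace (6 / (1 - q ^ 2) * Cmod y) with (2 * (3 * (Cmod y / (1 - q ^ 2)))) by (field; lra).
  lra.
Qed.

Definition W (q s : R) (l : nat) : R := s ^ l * sqrt q ^ (l * l).
Definition br (q : R) (n : nat) : R := (1 - q ^ n) / (1 - q).
Definition Dop (q : R) (a : nat -> C) (l : nat) : C :=
  Cminus (Cmult (RtoC (br q (S l))) (a (S l)))
    (match l with O => RtoC 0 | S k => Cmult (RtoC (q ^ k / (1 - q))) (a k) end).
Definition Dn (q : R) (e : nat) (a : nat -> C) : nat -> C := Nat.iter e (Dop q) a.
Fixpoint vv (q : R) (l : nat) : R := match l with O => 1 | S k => vv q k / (1 - q ^ (S k)) end.
Definition TT (q s : R) : R := / ((1 - q) * sqrt q * s).

Lemma pow_lt1 (q : R) (n : nat) : 0 < q < 1 -> 0 < q ^ S n < 1.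
Proof.
  intros Hq. split. apply pow_lt; lra.
  induction n. simpl; lra. change (q ^ S (S n)) with (q * q ^ S n). nra.
Qed.

Lemma pow_le_one (q : R) (n : nat) : 0 <= q <= 1 -> q ^ n <= 1.
Proof. intros Hq. induction n. simpl; lra. simpl. assert (0 <= q ^ n) by (apply pow_le; lra). nra. Qed.

Lemma vv_pos (q : R) (l : nat) : 0 < q < 1 -> 1 <= vv q l.
Proof.
  intros Hq. induction l. simpl; lra. simpl vv.
  generalize (pow_lt1 q l Hq). intros H.
  apply Rmult_le_reg_r with (1 - q ^ S l). lra.
  unfold Rdiv. rewrite Rmult_assoc, Rinv_l by lra. nra.
Qed.

Lemma vv_le (q : R) (l : nat) : 0 < q < 1 -> vv q l <= exp ((1 - q ^ l) / (1 - q) ^ 2).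
Proof.
  intros Hq. induction l.
  - simpl vv. rewrite pow_O. replace ((1 - 1) / (1 - q) ^ 2) with 0 by (field; lra). rewrite exp_0. lra.
  - simpl vv. generalize (pow_lt1 q l Hq). intros H. set (x := q ^ S l) in *.
    assert (Hx : x <= q). { unfold x. simpl. assert (q ^ l <= 1) by (apply pow_le_one ; lra). nra. }
    assert (H1 : 1 <= (1 - x) * exp (x / (1 - q))).
    { generalize (exp_ineq1_le (x / (1 - q))). intros E.
      assert ((1 - x) * (1 + x / (1 - q)) = 1 + x * (q - x) / (1 - q)) by (field; lra).
      assert (0 <= x * (q - x) / (1 - q)) by (apply Rdiv_le_0_compat; nra).
      nra. }
    assert (H2 : vv q l / (1 - x) <= vv q l * exp (x / (1 - q))).
    { apply Rmult_le_reg_r with (1 - x). lra.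
      unfold Rdiv. rewrite Rmult_assoc, Rinv_l by lra.
      generalize (vv_pos q l Hq). nra. }
    eapply Rle_trans; [exact H2|].
    assert (0 < exp (x / (1 - q))) by apply exp_pos.
    eapply Rle_trans. apply Rmult_le_compat_r. lra. exact IHl.
    rewrite <- exp_plus. apply exp_le.
    assert (Hql : x = q * q ^ l) by reflexivity.
    assert (x <= q ^ l). { assert (0 < q ^ l) by (apply pow_lt; lra). nra. }
    apply Rmult_le_reg_r with ((1 - q) ^ 2). nra.
    replace (((1 - q ^ l) / (1 - q) ^ 2 + x / (1 - q)) * (1 - q) ^ 2) with (1 - q ^ l + x * (1 - q)) by (field; lra).
    replace ((1 - x) / (1 - q) ^ 2 * (1 - q) ^ 2) with (1 - x) by (field; lra).
    nra.
Qed.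

Definition VV (q : R) : R := exp (/ (1 - q) ^ 2).

Lemma vv_le_V (q : R) (l : nat) : 0 < q < 1 -> vv q l <= VV q.
Proof.
  intros Hq. eapply Rle_trans; [apply vv_le; exact Hq|]. apply exp_le.
  assert (0 < q ^ l) by (apply pow_lt; lra).
  unfold Rdiv. rewrite <- (Rmult_1_l (/ (1 - q) ^ 2)) at 2. apply Rmult_le_compat_r.
  left; apply Rinv_0_lt_compat; nra. lra.
Qed.

Lemma W_pos (q s : R) (l : nat) : 0 < q -> 0 < s -> 0 < W q s l.
Proof. intros. unfold W. apply Rmult_lt_0_compat; apply pow_lt; auto. apply sqrt_lt_R0; auto. Qed.

Lemma W_S (q s : R) (l : nat) : W q s (S l) = W q s l * s * sqrt q ^ (2 * l + 1).
Proof.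
  unfold W. replace (S l * S l)%nat with (l * l + (2 * l + 1))%nat by lia.
  rewrite pow_add. simpl pow at 1. ring.
Qed.

Lemma key_real (r s K Wk vk A : R) : 0 < r < 1 -> 0 < s -> s * s * (r * r) < 1 -> 0 <= K ->
  0 < Wk -> 0 < vk -> 0 < A <= 1 ->
  let Wl := Wk * s * (r * A) in
  let vl := vk / (1 - r * r * A) in
  (1 - r ^ 4 * A) / (1 - r * r) * (K * (Wl * s * (r * r * r * A)) * (vl / (1 - r ^ 4 * A)))
   + A / (1 - r * r) * (K * Wk * vk)
  <= K * / ((1 - r * r) * r * s) * Wl * vl.
Proof.
  intros Hr Hs Hsr HK HW Hv HA Wl vl.
  assert (H1 : 0 < 1 - r * r * A) by nra.
  assert (H2 : 0 < 1 - r ^ 4 * A).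
  { assert (Hr2 : 0 < r * r < 1) by (split; nra).
    assert (r ^ 4 < 1) by (replace (r ^ 4) with ((r * r) * (r * r)) by ring; nra).
    assert (0 < r ^ 4) by (apply pow_lt; lra).
    assert (r ^ 4 * A <= r ^ 4) by (rewrite <- (Rmult_1_r (r ^ 4)) at 2; apply Rmult_le_compat_l; lra). lra. }
  assert (H3 : 0 < 1 - r * r) by nra.
  set (P := K * Wl * vl).
  assert (HP : 0 <= P).
  { unfold P, Wl, vl. apply Rmult_le_pos. apply Rmult_le_pos. lra. left. repeat apply Rmult_lt_0_compat; lra.
    apply Rlt_le, Rdiv_lt_0_compat; lra. }
  assert (E : (1 - r ^ 4 * A) / (1 - r * r) * (K * (Wl * s * (r * r * r * A)) * (vl / (1 - r ^ 4 * A)))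
   + A / (1 - r * r) * (K * Wk * vk) = P * / ((1 - r * r) * r * s) * (s * s * (r * r) * (r * r * A) + 1 - r * r * A)).
  { unfold P, Wl, vl. field. repeat split; nra. }
  rewrite E. replace (K * / ((1 - r * r) * r * s) * Wl * vl) with (P * / ((1 - r * r) * r * s)) by (unfold P; ring).
  assert (0 <= P * / ((1 - r * r) * r * s)).
  { apply Rmult_le_pos. exact HP. left. apply Rinv_0_lt_compat. apply Rmult_lt_0_compat; [nra|lra]. }
  assert (s * s * (r * r) * (r * r * A) <= r * r * A).
  { assert (0 < r * r * A) by (apply Rmult_lt_0_compat; nra).
    rewrite <- (Rmult_1_l (r * r * A)) at 2. apply Rmult_le_compat_r; lra. }
  rewrite <- (Rmult_1_r (P * / ((1 - r * r) * r * s))) at 2.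
  apply Rmult_le_compat_l; lra.
Qed.

Lemma Cmod_RC (c : R) (z : C) : Cmod (Cmult (RtoC c) z) = Rabs c * Cmod z.
Proof. rewrite Cmod_mult, Cmod_R. reflexivity. Qed.

Lemma Cmod_minus_le (x y : C) : Cmod (Cminus x y) <= Cmod x + Cmod y.
Proof. unfold Cminus. eapply Rle_trans; [apply Cmod_triangle|]. rewrite Cmod_opp. lra. Qed.

Lemma Dop_bound (q s K : R) (a : nat -> C) : 0 < q < 1 -> 0 < s -> s * s * q < 1 -> 0 <= K ->
  (forall l, Cmod (a l) <= K * W q s l * vv q l) ->
  forall l, Cmod (Dop q a l) <= K * TT q s * W q s l * vv q l.
Proof.
  intros Hq Hs Hsq HK Ha l.
  set (r := sqrt q).
  assert (Hrr : r * r = q) by (apply sqrt_sqrt; lra).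
  assert (Hr : 0 < r < 1).
  { split. apply sqrt_lt_R0; lra. unfold r. rewrite <- sqrt_1. apply sqrt_lt_1_alt. lra. }
  assert (Hqn : forall n, q ^ n = r ^ (2 * n)) by (intros n; rewrite pow_mult; simpl; rewrite Rmult_1_r, Hrr; reflexivity).
  unfold Dop. eapply Rle_trans; [apply Cmod_minus_le|].
  rewrite Cmod_RC.
  assert (Hbr : forall n, 0 <= br q n).
  { intros n. unfold br. apply Rdiv_le_0_compat. 2: lra. destruct n. simpl; lra.
    generalize (pow_lt1 q n Hq). lra. }
  rewrite (Rabs_pos_eq _ (Hbr _)).
  destruct l as [|k].
  - rewrite Cmod_0, Rplus_0_r. unfold br. simpl pow. 
    eapply Rle_trans. apply Rmult_le_compat_l. replace ((1 - q * 1) / (1 - q)) with 1 by (field; lra). lra. apply Ha.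
    replace ((1 - q * 1) / (1 - q)) with 1 by (field; lra).
    rewrite W_S. unfold W, TT. simpl. fold r.
    replace (1 * (K * (1 * 1 * s * (r * 1)) * (1 / (1 - q * 1)))) with (K * (s * r) / (1 - q)) by (field; lra).
    replace (K * / ((1 - q) * r * s) * (1 * 1) * 1) with (K / ((1 - q) * r * s)) by (field; repeat split; lra).
    apply Rmult_le_reg_r with ((1 - q) * r * s). repeat apply Rmult_lt_0_compat; lra.
    replace (K * (s * r) / (1 - q) * ((1 - q) * r * s)) with (K * (s * s * q)) by (rewrite <- Hrr; field; lra).
    replace (K / ((1 - q) * r * s) * ((1 - q) * r * s)) with K by (field; repeat split; lra).
    rewrite <- (Rmult_1_r K) at 2. apply Rmult_le_compat_l; lra.
  - rewrite Cmod_RC. assert (0 < q ^ k) by (apply pow_lt; lra).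
    rewrite Rabs_pos_eq by (apply Rdiv_le_0_compat; lra).
    eapply Rle_trans. apply Rplus_le_compat.
    apply Rmult_le_compat_l. apply Hbr. apply Ha.
    apply Rmult_le_compat_l. apply Rdiv_le_0_compat; lra. apply Ha.
    set (A := r ^ (2 * k)).
    assert (HA : 0 < A <= 1).
    { split. apply pow_lt; lra. apply pow_le_one; lra. }
    assert (E1 : W q s (S k) = W q s k * s * (r * A)).
    { rewrite W_S. fold r. unfold A. rewrite Nat.add_1_r. simpl. ring. }
    assert (E2 : W q s (S (S k)) = W q s (S k) * s * (r * r * r * A)).
    { rewrite (W_S q s (S k)). fold r. unfold A.
      replace (2 * S k + 1)%nat with (S (S (S (2 * k)))) by lia. simpl. ring. }
    assert (Hq1 : q ^ S k = r * r * A) by (change (q ^ S k) with (q * q ^ k); rewrite (Hqn k), <- Hrr; reflexivity).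
    assert (Hq2 : q ^ S (S k) = r ^ 4 * A) by (change (q ^ S (S k)) with (q * (q * q ^ k)); rewrite (Hqn k), <- Hrr; fold A; ring).
    assert (E3 : vv q (S k) = vv q k / (1 - r * r * A)) by (change (vv q (S k)) with (vv q k / (1 - q ^ S k)); rewrite Hq1; reflexivity).
    assert (E4 : vv q (S (S k)) = vv q (S k) / (1 - r ^ 4 * A)) by (change (vv q (S (S k))) with (vv q (S k) / (1 - q ^ S (S k))); rewrite Hq2; reflexivity).
    assert (E5 : br q (S (S k)) = (1 - r ^ 4 * A) / (1 - r * r)) by (unfold br; rewrite Hq2, Hrr; reflexivity).
    assert (E6 : q ^ k / (1 - q) = A / (1 - r * r)) by (rewrite Hqn, Hrr; reflexivity).
    assert (E7 : TT q s = / ((1 - r * r) * r * s)) by (unfold TT; rewrite Hrr; reflexivity).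
    rewrite E5, E6, E7, E4, E2, E1, E3.
    rewrite E1 in E2.
    assert (Hsr : s * s * (r * r) < 1) by (rewrite Hrr; exact Hsq).
    assert (0 < vv q k) by (generalize (vv_pos q k Hq); lra).
    generalize (key_real r s K (W q s k) (vv q k) A Hr Hs Hsr HK (W_pos q s k ltac:(lra) Hs) ltac:(lra) HA).
    simpl. intros HH. rewrite !Rmult_assoc in HH |- *. exact HH.
Qed.

Lemma TT_pos (q s : R) : 0 < q < 1 -> 0 < s -> 0 < TT q s.
Proof. intros. unfold TT. apply Rinv_0_lt_compat. repeat apply Rmult_lt_0_compat; try lra. apply sqrt_lt_R0; lra. Qed.

Lemma Dn_S (q : R) (e : nat) (a : nat -> C) : Dn q (S e) a = Dop q (Dn q e a).
Proof. reflexivity. Qed.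

Lemma Dn_bound (q s K : R) (a : nat -> C) : 0 < q < 1 -> 0 < s -> s * s * q < 1 -> 0 <= K ->
  (forall l, Cmod (a l) <= K * W q s l * vv q l) ->
  forall e l, Cmod (Dn q e a l) <= K * TT q s ^ e * W q s l * vv q l.
Proof.
  intros Hq Hs Hsq HK Ha e. induction e.
  - intros l. simpl. rewrite Rmult_1_r. apply Ha.
  - intros l. rewrite Dn_S. replace (K * TT q s ^ S e) with ((K * TT q s ^ e) * TT q s) by (simpl; ring).
    apply Dop_bound; auto. apply Rmult_le_pos. lra. apply pow_le. generalize (TT_pos q s Hq Hs); lra.
Qed.

Lemma ex_series_W (q s R0 : R) : 0 < q < 1 -> 0 < s -> 0 <= R0 ->
  ex_series (fun l => W q s l * R0 ^ l).
Proof.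
  intros Hq Hs HR.
  set (r := sqrt q). assert (Hr : 0 < r < 1).
  { split. apply sqrt_lt_R0; lra. unfold r. rewrite <- sqrt_1. apply sqrt_lt_1_alt. lra. }
  set (b := fun l => W q s l * (R0 + 1) ^ l).
  assert (Hb : forall l, 0 < b l).
  { intros l. unfold b. apply Rmult_lt_0_compat. apply W_pos; lra. apply pow_lt; lra. }
  assert (Hex : ex_series (fun n => Rabs (b n))).
  { apply (ex_series_DAlembert b 0). lra. intros n; generalize (Hb n); lra.
    apply (is_lim_seq_ext (fun n => (s * (R0 + 1) * r) * (r * r) ^ n)).
    - intros n. rewrite Rabs_pos_eq. 2: { apply Rlt_le, Rdiv_lt_0_compat; apply Hb. }
      unfold b. rewrite W_S. fold r.
      replace (r ^ (2 * n + 1)) with (r * (r * r) ^ n) by (rewrite pow_add, pow_mult; simpl; rewrite !Rmult_1_r; ring).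
      simpl pow. field. split. apply pow_nonzero; lra. generalize (W_pos q s n ltac:(lra) Hs); lra.
    - replace (Finite 0) with (Rbar_mult (s * (R0 + 1) * r) 0) by (simpl; f_equal; ring).
      apply is_lim_seq_scal_l. apply is_lim_seq_geom. rewrite Rabs_pos_eq; nra. }
  apply (ex_series_le (fun l => W q s l * R0 ^ l) (fun n => Rabs (b n))); [|exact Hex].
  intros n. rewrite (Rabs_pos_eq (b n)) by (apply Rlt_le, Hb). unfold b.
  change (norm (W q s n * R0 ^ n)) with (Rabs (W q s n * R0 ^ n)).
  rewrite Rabs_pos_eq. apply Rmult_le_compat_l. apply Rlt_le, W_pos; lra.
  apply pow_incr; lra. apply Rmult_le_pos. apply Rlt_le, W_pos; lra. apply pow_le; lra.
Qed.

Definition SW (q s R0 : R) : R := Series (fun l => W q s l * R0 ^ l).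
Definition PS (a : nat -> C) (x : C) : C := Csum (fun l => Cmult (a l) (Cpow x l)).

Lemma PS_is (q s Kb : R) (b : nat -> C) (x : C) : 0 < q < 1 -> 0 < s ->
  (forall l, Cmod (b l) <= Kb * W q s l) ->
  is_series (fun l => Cmult (b l) (Cpow x l)) (PS b x).
Proof.
  intros Hq Hs Hb. apply ex_is_Csum.
  apply ex_series_C_le with (b := fun l => Kb * (W q s l * Cmod x ^ l)).
  - intros l. rewrite Cmod_mult, Cmod_pow. rewrite <- Rmult_assoc. apply Rmult_le_compat_r.
    apply pow_le, Cmod_ge_0. apply Hb.
  - apply (@ex_series_scal_l R_AbsRing R_NormedModule Kb (fun l => W q s l * Cmod x ^ l)).
    apply ex_series_W; auto. apply Cmod_ge_0.
Qed.

Lemma PS_norm (q s Kb : R) (b : nat -> C) (x : C) : 0 < q < 1 -> 0 < s ->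
  (forall l, Cmod (b l) <= Kb * W q s l) ->
  Cmod (PS b x) <= Kb * SW q s (Cmod x).
Proof.
  intros Hq Hs Hb. apply (series_norm (fun l => Cmult (b l) (Cpow x l)) _ (fun l => Kb * (W q s l * Cmod x ^ l))).
  - apply (PS_is q s Kb); auto.
  - apply (@is_series_scal R_AbsRing R_NormedModule Kb (fun l => W q s l * Cmod x ^ l)).
    apply Series_correct. apply ex_series_W; auto. apply Cmod_ge_0.
  - intros l. rewrite Cmod_mult, Cmod_pow. rewrite <- Rmult_assoc. apply Rmult_le_compat_r.
    apply pow_le, Cmod_ge_0. apply Hb.
Qed.

Definition SW1 (q s : R) : R := Series (fun l => W q s (S l)).

Lemma PS_near0 (q s Kb : R) (b : nat -> C) (y : C) : 0 < q < 1 -> 0 < s ->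
  (forall l, Cmod (b l) <= Kb * W q s l) -> Cmod y <= 1 ->
  Cmod (Cminus (PS b y) (b O)) <= Kb * SW1 q s * Cmod y.
Proof.
  intros Hq Hs Hb Hy.
  assert (H := PS_is q s Kb b y Hq Hs Hb).
  assert (H1 : is_series (fun k => Cmult (b (S k)) (Cpow y (S k))) (Cminus (PS b y) (b O))).
  { apply (is_series_incr_1 (fun l => Cmult (b l) (Cpow y l))).
    match goal with |- is_series _ ?L => replace L with (PS b y) end.
    exact H. change (PS b y = Cplus (Cminus (PS b y) (b O)) (Cmult (b O) (RtoC 1))). unfold Cminus. ring. }
  apply (series_norm _ _ (fun k => Cmod y * Kb * W q s (S k)) _ H1).
  - replace (Kb * SW1 q s * Cmod y) with (Cmod y * Kb * SW1 q s) by ring.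
    apply (@is_series_scal R_AbsRing R_NormedModule (Cmod y * Kb) (fun k => W q s (S k))).
    apply Series_correct. apply (proj1 (ex_series_incr_1 (fun l => W q s l))).
    apply (ex_series_ext (fun l => W q s l * 1 ^ l)); [intros n; rewrite pow1; apply Rmult_1_r | apply ex_series_W; lra].
  - intros k. rewrite Cmod_mult, Cmod_pow. simpl pow.
    assert (0 <= Cmod y) by apply Cmod_ge_0.
    assert (Cmod y ^ k <= 1) by (apply pow_le_one; lra).
    assert (0 <= Cmod y ^ k) by (apply pow_le; lra).
    generalize (Hb (S k)). generalize (Cmod_ge_0 (b (S k))). intros. 
    assert (Cmod (b (S k)) * (Cmod y * Cmod y ^ k) <= Cmod (b (S k)) * Cmod y) .
    { rewrite <- (Rmult_1_r (Cmod (b (S k)) * Cmod y)). rewrite <- Rmult_assoc. apply Rmult_le_compat_l; nra. }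
    nra.
Qed.

Lemma PS_0 (q s Kb : R) (b : nat -> C) : 0 < q < 1 -> 0 < s ->
  (forall l, Cmod (b l) <= Kb * W q s l) -> PS b (RtoC 0) = b O.
Proof.
  intros Hq Hs Hb. generalize (PS_near0 q s Kb b (RtoC 0) Hq Hs Hb). rewrite Cmod_0, Rmult_0_r.
  intros H. assert (H' : Cmod (Cminus (PS b (RtoC 0)) (b O)) <= 0) by (apply H; lra).
  assert (E : Cminus (PS b (RtoC 0)) (b O) = RtoC 0).
  { apply Cmod_eq_0. generalize (Cmod_ge_0 (Cminus (PS b (RtoC 0)) (b O))). lra. }
  replace (PS b (RtoC 0)) with (Cplus (Cminus (PS b (RtoC 0)) (b O)) (b O)) by (unfold Cminus; ring).
  rewrite E. ring.
Qed.

Lemma RtoC_nz (x : R) : x <> 0 -> RtoC x <> RtoC 0.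
Proof. intros H E. apply H. apply (f_equal fst) in E. exact E. Qed.

Lemma boundW_vv (q s Kb : R) (b : nat -> C) : 0 < q < 1 -> 0 < s -> 0 <= Kb ->
  (forall l, Cmod (b l) <= Kb * W q s l) -> forall l, Cmod (b l) <= Kb * W q s l * vv q l.
Proof.
  intros Hq Hs HK Hb l. eapply Rle_trans; [apply Hb|].
  rewrite <- (Rmult_1_r (Kb * W q s l)) at 1. apply Rmult_le_compat_l.
  apply Rmult_le_pos; [lra|apply Rlt_le, W_pos; lra]. apply vv_pos; lra.
Qed.

Lemma Dop_boundW (q s Kb : R) (b : nat -> C) : 0 < q < 1 -> 0 < s -> s * s * q < 1 -> 0 <= Kb ->
  (forall l, Cmod (b l) <= Kb * W q s l) ->
  forall l, Cmod (Dop q b l) <= (Kb * TT q s * VV q) * W q s l.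
Proof.
  intros Hq Hs Hsq HK Hb l.
  eapply Rle_trans; [apply (Dop_bound q s Kb b Hq Hs Hsq HK (boundW_vv q s Kb b Hq Hs HK Hb))|].
  assert (0 < TT q s) by (apply TT_pos; lra). assert (0 < W q s l) by (apply W_pos; lra).
  replace (Kb * TT q s * VV q * W q s l) with ((Kb * TT q s * W q s l) * VV q) by ring.
  apply Rmult_le_compat_l. apply Rmult_le_pos; [apply Rmult_le_pos|]; lra. apply vv_le_V; lra.
Qed.

Lemma DQ (q s Kb : R) (b : nat -> C) (x : C) : 0 < q < 1 -> 0 < s -> s * s * q < 1 -> 0 <= Kb ->
  (forall l, Cmod (b l) <= Kb * W q s l) -> x <> RtoC 0 ->
  PS (Dop q b) x = Cdiv (Cminus (PS b x) (Cmult (Cplus (RtoC 1) (Cmult x x)) (PS b (Cmult (RtoC q) x))))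
                        (Cmult (RtoC (1 - q)) x).
Proof.
  intros Hq Hs Hsq HK Hb Hx.
  set (A := PS b x). set (B := PS b (Cmult (RtoC q) x)).
  assert (HA : is_series (fun l => Cmult (b l) (Cpow x l)) A) by (apply (PS_is q s Kb); auto).
  assert (HB : is_series (fun l => Cmult (b l) (Cpow (Cmult (RtoC q) x) l)) B) by (apply (PS_is q s Kb); auto).
  set (t1 := fun l => Cmult (Cmult (b (S l)) (RtoC (1 - q ^ (S l)))) (Cpow x (S l))).
  set (t2 := fun l => match l with O => RtoC 0 | S k => Cmult (Cmult (RtoC (q ^ k)) (b k)) (Cpow x (S (S k))) end).
  assert (H1 : is_series t1 (Cminus A B)).
  { generalize (is_series_minus _ _ _ _ HA HB). intros HAB.
    set (f0 := fun n => plus (Cmult (b n) (Cpow x n)) (opp (Cmult (b n) (Cpow (Cmult (RtoC q) x) n)))).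
    apply (is_series_ext (fun k => f0 (S k))).
    - intros n. change (Cplus (Cmult (b (S n)) (Cpow x (S n))) (Copp (Cmult (b (S n)) (Cpow (Cmult (RtoC q) x) (S n)))) = t1 n).
      unfold t1. rewrite Cpow_mult_l, <- RtoC_pow, RtoC_minus. ring.
    - apply (is_series_incr_1 f0).
      match goal with |- is_series _ ?L => replace L with (plus A (opp B)) end. exact HAB.
      unfold f0. change (Cplus A (Copp B) = Cplus (Cminus A B) (Cplus (Cmult (b O) (RtoC 1)) (Copp (Cmult (b O) (RtoC 1))))).
      unfold Cminus. ring. }
  assert (H2 : is_series t2 (Cmult (Cmult x x) B)).
  { apply (is_series_decr_1 t2).
    match goal with |- is_series _ ?L => replace L with (Cmult (Cmult x x) B) end.
    2: { change (Cmult (Cmult x x) B = Cplus (Cmult (Cmult x x) B) (Copp (RtoC 0))). ring. }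
    apply (is_series_ext (fun n => scal (Cmult x x) (Cmult (b n) (Cpow (Cmult (RtoC q) x) n)))).
    - intros n. change (Cmult (Cmult x x) (Cmult (b n) (Cpow (Cmult (RtoC q) x) n)) = t2 (S n)).
      unfold t2. rewrite Cpow_mult_l, <- RtoC_pow. simpl Cpow. ring.
    - exact (@is_series_scal C_AbsRing C_NormedModule (Cmult x x) _ B HB). }
  set (c := Cinv (Cmult (RtoC (1 - q)) x)).
  assert (H3 : is_series (fun l => Cmult (Dop q b l) (Cpow x l)) (Cmult c (Cminus (Cminus A B) (Cmult (Cmult x x) B)))).
  { apply (is_series_ext (fun n => scal c (plus (t1 n) (opp (t2 n))))).
    2: { exact (@is_series_scal C_AbsRing C_NormedModule c _ _ (is_series_minus _ _ _ _ H1 H2)). }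
    intros n. change (Cmult c (Cplus (t1 n) (Copp (t2 n))) = Cmult (Dop q b n) (Cpow x n)).
    assert (Hq1 : RtoC (1 - q) <> RtoC 0) by (apply RtoC_nz; lra).
    assert (Hq1' : Cminus (RtoC 1) (RtoC q) <> RtoC 0) by (rewrite <- RtoC_minus; exact Hq1).
    unfold c, t1, t2, Dop, br. destruct n as [|k].
    - rewrite RtoC_div by lra. simpl Cpow. rewrite !RtoC_minus. simpl pow. rewrite Rmult_1_r. 
      field. repeat split; assumption.
    - rewrite !RtoC_div by lra. rewrite !RtoC_minus. rewrite !(Cpow_S x (S k)).
      field. repeat split; assumption. }
  transitivity (Cmult c (Cminus (Cminus A B) (Cmult (Cmult x x) B))); [exact (Csum_is _ _ H3)|]. unfold c, Cdiv. unfold Cminus. ring.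
Qed.

Lemma im_le_Cmod' (y : C) : Rabs (Im y) <= Cmod y.
Proof. eapply Rle_trans; [|apply Rmax_Cmod]. apply Rmax_r. Qed.

Lemma strip_small (y : C) : Cmod y < 1 -> in_strip y.
Proof. intros H. unfold in_strip. generalize (im_le_Cmod' y). lra. Qed.

Lemma strip_q (q : R) (x : C) : 0 < q < 1 -> in_strip x -> in_strip (Cmult (RtoC q) x).
Proof.
  intros Hq Hx. unfold in_strip in *. destruct x as [a b]. unfold Im in *. simpl in *.
  replace (q * b + 0 * a) with (q * b) by ring. rewrite Rabs_mult, (Rabs_pos_eq q) by lra.
  assert (0 <= Rabs b) by apply Rabs_pos. nra.
Qed.

Lemma strip_nz (x : C) : in_strip x -> Cplus (RtoC 1) (Cmult x x) <> RtoC 0.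
Proof.
  intros Hx E. unfold in_strip in Hx. destruct x as [a b]. unfold Im in Hx. simpl in Hx.
  assert (E1 := f_equal fst E). assert (E2 := f_equal snd E). simpl in E1, E2.
  apply Rabs_def2 in Hx. destruct Hx. nra.
Qed.

Lemma qdiffquot_rep (q s Kb : R) (b : nat -> C) (G : C -> C) (x : C) :
  0 < q < 1 -> 0 < s -> s * s * q < 1 -> 0 <= Kb ->
  (forall l, Cmod (b l) <= Kb * W q s l) ->
  (forall y, in_strip y -> G y = Cmult (PS b y) (EE q y)) ->
  in_strip x -> x <> RtoC 0 ->
  qdiffquot q G x = Cmult (PS (Dop q b) x) (EE q x).
Proof.
  intros Hq Hs Hsq HK Hb HG Hx Hx0.
  unfold qdiffquot. rewrite (HG x Hx), (HG _ (strip_q q x Hq Hx)).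
  rewrite (EE_rel q x Hq (strip_nz x Hx)).
  rewrite (DQ q s Kb b x Hq Hs Hsq HK Hb Hx0). unfold Cdiv, Cminus. ring.
Qed.

Lemma locally'_proper : ProperFilter (@locally' C_UniformSpace (RtoC 0)).
Proof.
  constructor.
  - intros P [eps Heps]. exists (RtoC (eps / 2)). apply Heps.
    + apply ball_of_norm. replace (Cminus (RtoC (eps / 2)) (RtoC 0)) with (RtoC (eps / 2)) by (unfold Cminus; ring).
      rewrite Cmod_R, Rabs_pos_eq. generalize (cond_pos eps); lra. generalize (cond_pos eps); lra.
    + intros E. apply (f_equal fst) in E. simpl in E. generalize (cond_pos eps); lra.
  - apply locally'_filter.
Qed.

Lemma lim_C (f : C -> C) (L : C) :
  filterlim f (@locally' C_UniformSpace (RtoC 0)) (locally L) ->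
  @lim C_CompleteNormedModule (filtermap f (@locally' C_UniformSpace (RtoC 0))) = L.
Proof.
  intros H.
  assert (HP : ProperFilter (filtermap f (@locally' C_UniformSpace (RtoC 0)))).
  { apply filtermap_proper_filter. apply locally'_proper. }
  assert (Hc : cauchy (filtermap f (@locally' C_UniformSpace (RtoC 0)))).
  { intros eps. exists L. apply (proj1 (filterlim_locally _ _) H eps). }
  assert (H2 : forall eps : posreal, filtermap f (@locally' C_UniformSpace (RtoC 0))
      (ball (@lim C_CompleteNormedModule (filtermap f (@locally' C_UniformSpace (RtoC 0)))) eps)).
  { apply complete_cauchy. exact HP. exact Hc. }
  assert (H3 : filterlim f (@locally' C_UniformSpace (RtoC 0)) (locally (@lim C_CompleteNormedModule (filtermap f (@locally' C_UniformSpace (RtoC 0)))))).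
  { apply (proj2 (filterlim_locally _ _)). intros eps. apply H2. }
  symmetry. apply (@filterlim_locally_unique _ C_AbsRing C_NormedModule _ (Proper_StrongProper _ locally'_proper) f L _ H H3).
Qed.

Lemma filterlim_lin0 (f : C -> C) (L : C) (rho M : R) : 0 < rho -> 0 <= M ->
  (forall y, Cmod y < rho -> y <> RtoC 0 -> Cmod (Cminus (f y) L) <= M * Cmod y) ->
  filterlim f (@locally' C_UniformSpace (RtoC 0)) (locally L).
Proof.
  intros Hr HM H. apply (proj2 (filterlim_locally _ _)). intros eps.
  assert (Hs2 : 0 < sqrt 2) by (apply sqrt_lt_R0; lra).
  set (d := Rmin rho (eps / (M + 1)) / sqrt 2).
  assert (Hd : 0 < d).
  { unfold d. apply Rdiv_lt_0_compat; [|exact Hs2]. apply Rmin_pos. exact Hr.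
    apply Rdiv_lt_0_compat. apply cond_pos. lra. }
  exists (mkposreal d Hd). intros y Hy Hy0.
  apply norm_of_ball in Hy. simpl in Hy.
  assert (Ez : forall z : C, Cminus z (RtoC 0) = z) by (intros; unfold Cminus; ring).
  rewrite Ez in Hy.
  replace (sqrt 2 * d) with (Rmin rho (eps / (M + 1))) in Hy by (unfold d; field; lra).
  apply ball_of_norm. 
  assert (H1 : Cmod y < rho) by (generalize (Rmin_l rho (eps / (M + 1))); lra).
  assert (H2 : Cmod y < eps / (M + 1)) by (generalize (Rmin_r rho (eps / (M + 1))); lra).
  specialize (H y H1 Hy0). assert (0 <= Cmod y) by apply Cmod_ge_0.
  assert ((M + 1) * Cmod y < eps).
  { apply Rmult_lt_reg_r with (/ (M + 1)). apply Rinv_0_lt_compat; lra.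
    replace ((M + 1) * Cmod y * / (M + 1)) with (Cmod y) by (field; lra). exact H2. }
  nra.
Qed.

Lemma PSEE_cont0 (q s Kb : R) (b : nat -> C) : 0 < q < 1 -> 0 < s -> 0 <= Kb ->
  (forall l, Cmod (b l) <= Kb * W q s l) ->
  filterlim (fun y => Cmult (PS b y) (EE q y)) (@locally' C_UniformSpace (RtoC 0))
    (locally (Cmult (PS b (RtoC 0)) (EE q (RtoC 0)))).
Proof.
  intros Hq Hs HK Hb.
  rewrite (PS_0 q s Kb b Hq Hs Hb), (EE0 q Hq).
  set (Ce := 6 / (1 - q ^ 2)).
  assert (Hq2 : 0 < 1 - q ^ 2) by nra.
  assert (HCe : 0 <= Ce) by (unfold Ce; apply Rdiv_le_0_compat; lra).
  assert (HSW1 : 0 <= SW1 q s).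
  { unfold SW1. assert (Hx : ex_series (fun l => W q s (S l))).
    { apply (proj1 (ex_series_incr_1 (fun l => W q s l))).
      apply (ex_series_ext (fun l => W q s l * 1 ^ l)); [intros n; rewrite pow1; apply Rmult_1_r | apply ex_series_W; lra]. }
    generalize (Series_le (fun n => 0 * W q s (S n)) (fun n => W q s (S n))). rewrite Series_scal_l, Rmult_0_l.
    intros HH. apply HH; [|exact Hx]. intros n. generalize (W_pos q s (S n) ltac:(lra) Hs). lra. }
  apply (filterlim_lin0 _ _ (Rmin 1 ((1 - q ^ 2) / 6)) (Kb * SW1 q s * (1 + Ce) + Cmod (b O) * Ce)).
  - apply Rmin_pos. lra. lra.
  - assert (0 <= Cmod (b O)) by apply Cmod_ge_0. 
    assert (0 <= Kb * SW1 q s) by (apply Rmult_le_pos; lra). nra.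
  - intros y Hy Hy0.
    assert (Hy1 : Cmod y <= 1) by (generalize (Rmin_l 1 ((1 - q ^ 2) / 6)); lra).
    assert (Hy2 : Cmod y <= (1 - q ^ 2) / 6) by (generalize (Rmin_r 1 ((1 - q ^ 2) / 6)); lra).
    generalize (PS_near0 q s Kb b y Hq Hs Hb Hy1). intros H1.
    generalize (EE_near q y Hq Hy2). fold Ce. intros H2.
    replace (Cminus (Cmult (PS b y) (EE q y)) (Cmult (b O) (RtoC 1)))
      with (Cplus (Cmult (Cminus (PS b y) (b O)) (EE q y)) (Cmult (b O) (Cminus (EE q y) (RtoC 1))))
      by (unfold Cminus; ring).
    eapply Rle_trans; [apply Cmod_triangle|]. rewrite !Cmod_mult.
    assert (HE : Cmod (EE q y) <= 1 + Ce).
    { replace (EE q y) with (Cplus (RtoC 1) (Cminus (EE q y) (RtoC 1))) by (unfold Cminus; ring).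
      eapply Rle_trans; [apply Cmod_triangle|]. rewrite Cmod_1.
      assert (Ce * Cmod y <= Ce) by (rewrite <- (Rmult_1_r Ce) at 2; apply Rmult_le_compat_l; lra). lra. }
    assert (0 <= Cmod y) by apply Cmod_ge_0.
    assert (0 <= Cmod (Cminus (PS b y) (b O))) by apply Cmod_ge_0.
    assert (0 <= Cmod (b O)) by apply Cmod_ge_0.
    assert (Cmod (Cminus (PS b y) (b O)) * Cmod (EE q y) <= Kb * SW1 q s * Cmod y * (1 + Ce)).
    { apply Rmult_le_compat; try lra. apply Cmod_ge_0. }
    assert (Cmod (b O) * Cmod (Cminus (EE q y) (RtoC 1)) <= Cmod (b O) * (Ce * Cmod y)).
    { apply Rmult_le_compat_l; lra. }
    nra.
Qed.

Lemma qderiv_rep (q s Kb : R) (b : nat -> C) (G0 : C -> C) :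
  0 < q < 1 -> 0 < s -> s * s * q < 1 -> 0 <= Kb ->
  (forall l, Cmod (b l) <= Kb * W q s l) ->
  (forall y, in_strip y -> G0 y = Cmult (PS b y) (EE q y)) ->
  forall x, in_strip x -> qderiv q G0 x = Cmult (PS (Dop q b) x) (EE q x).
Proof.
  intros Hq Hs Hsq HK Hb HG x Hx. unfold qderiv.
  destruct (Req_EM_T (Re x) 0) as [H1|H1]; destruct (Req_EM_T (Im x) 0) as [H2|H2].
  - destruct x as [x1 x2]. unfold Re, Im in H1, H2. simpl in H1, H2. subst.
    change (0, 0) with (RtoC 0).
    apply lim_C.
    apply (filterlim_ext_loc (fun y => Cmult (PS (Dop q b) y) (EE q y))).
    + exists (mkposreal (/ 2) ltac:(lra)). intros y Hy Hy0.
      apply norm_of_ball in Hy. simpl in Hy.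
      assert (Ez : forall z : C, Cminus z (RtoC 0) = z) by (intros; unfold Cminus; ring).
      rewrite Ez in Hy.
      assert (Hs2 : sqrt 2 < 2).
      { assert (sqrt 2 * sqrt 2 = 2) by (apply sqrt_sqrt; lra).
        assert (0 <= sqrt 2) by apply sqrt_pos. nra. }
      assert (Hy1 : Cmod y < 1) by lra.
      symmetry. apply (qdiffquot_rep q s Kb); auto. apply strip_small; exact Hy1.
    + apply (PSEE_cont0 q s (Kb * TT q s * VV q)); auto.
      * apply Rmult_le_pos. apply Rmult_le_pos. lra. apply Rlt_le, TT_pos; lra.
        apply Rlt_le, exp_pos.
      * apply Dop_boundW; auto.
  - apply (qdiffquot_rep q s Kb); auto. intros E. rewrite E in H2. apply H2. reflexivity.
  - apply (qdiffquot_rep q s Kb); auto. intros E. rewrite E in H1. apply H1. reflexivity.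
  - apply (qdiffquot_rep q s Kb); auto. intros E. rewrite E in H1. apply H1. reflexivity.
Qed.

Lemma Dn_boundW (q s K : R) (a : nat -> C) : 0 < q < 1 -> 0 < s -> s * s * q < 1 -> 0 <= K ->
  (forall l, Cmod (a l) <= K * W q s l) ->
  forall e l, Cmod (Dn q e a l) <= (K * TT q s ^ e * VV q) * W q s l.
Proof.
  intros Hq Hs Hsq HK Ha e l.
  eapply Rle_trans; [apply (Dn_bound q s K a Hq Hs Hsq HK (boundW_vv q s K a Hq Hs HK Ha))|].
  assert (0 < TT q s) by (apply TT_pos; lra). assert (0 < W q s l) by (apply W_pos; lra).
  assert (0 <= TT q s ^ e) by (apply pow_le; lra).
  replace (K * TT q s ^ e * VV q * W q s l) with ((K * TT q s ^ e * W q s l) * VV q) by ring.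
  apply Rmult_le_compat_l. apply Rmult_le_pos; [apply Rmult_le_pos|]; lra. apply vv_le_V; lra.
Qed.

Lemma qderiv_n_rep (q s K : R) (a : nat -> C) (h : C -> C) :
  0 < q < 1 -> 0 < s -> s * s * q < 1 -> 0 <= K ->
  (forall l, Cmod (a l) <= K * W q s l) ->
  (forall y, in_strip y -> h y = Cmult (PS a y) (EE q y)) ->
  forall e x, in_strip x -> qderiv_n q e h x = Cmult (PS (Dn q e a) x) (EE q x).
Proof.
  intros Hq Hs Hsq HK Ha Hh e. induction e.
  - intros x Hx. simpl. apply Hh; exact Hx.
  - intros x Hx. change (qderiv_n q (S e) h x) with (qderiv q (qderiv_n q e h) x).
    rewrite Dn_S. apply (qderiv_rep q s (K * TT q s ^ e * VV q)); auto.
    + apply Rmult_le_pos. apply Rmult_le_pos. lra. apply pow_le, Rlt_le, TT_pos; lra.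
      apply Rlt_le, exp_pos.
    + apply Dn_boundW; auto.
Qed.

Lemma series_lim (a : nat -> R) (S0 : R) : is_series a S0 -> is_lim_seq (sum_n a) S0.
Proof. intros H. exact H. Qed.

Lemma Cmod_minus_sym (x y : C) : Cmod (Cminus x y) = Cmod (Cminus y x).
Proof. replace (Cminus x y) with (Copp (Cminus y x)) by (unfold Cminus; ring). apply Cmod_opp. Qed.

Lemma fubini_prod (u : nat -> nat -> C) (al be : nat -> R) (Sa Sb : R) :
  (forall e l, Cmod (u e l) <= al e * be l) -> (forall e, 0 <= al e) -> (forall l, 0 <= be l) ->
  is_series al Sa -> is_series be Sb ->
  is_series (fun e => Csum (u e)) (Csum (fun l => Csum (fun e => u e l))).
Proof.
  intros Hu Ha Hb HSa HSb.
  assert (Hrow : forall e, is_series (u e) (Csum (u e))).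
  { intros e. apply ex_is_Csum. apply ex_series_C_le with (b := fun l => al e * be l); [apply Hu|].
    apply (@ex_series_scal_l R_AbsRing R_NormedModule (al e) be). eexists; exact HSb. }
  assert (Hcol : forall l, is_series (fun e => u e l) (Csum (fun e => u e l))).
  { intros l. apply ex_is_Csum. apply ex_series_C_le with (b := fun e => al e * be l); [intros; apply Hu|].
    apply ex_series_scal_r. eexists; exact HSa. }
  set (B := fun l => Csum (fun e => u e l)).
  assert (HB : ex_series B).
  { apply ex_series_C_le with (b := fun l => Sa * be l).
    - intros l. apply (series_norm (fun e => u e l) _ (fun e => al e * be l)). apply Hcol.
      apply is_series_scal_r. exact HSa. intros; apply Hu.
    - apply (@ex_series_scal_l R_AbsRing R_NormedModule Sa be). eexists; exact HSb. }
  assert (HBs := ex_is_Csum B HB). set (S0 := Csum B) in *.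
  assert (Hfin : forall N, is_series (fun l => sum_n (fun e => u e l) N) (sum_n (fun e => Csum (u e)) N)).
  { induction N.
    - apply (is_series_ext (u O)). intros l. rewrite sum_O. reflexivity. rewrite sum_O. apply Hrow.
    - apply (is_series_ext (fun l => plus (sum_n (fun e => u e l) N) (u (S N) l))).
      intros l. rewrite sum_Sn. reflexivity. rewrite sum_Sn. exact (is_series_plus _ _ _ _ IHN (Hrow (S N))). }
  assert (Htail : forall N l, Cmod (Cminus (B l) (sum_n (fun e => u e l) N)) <= be l * (Sa - sum_n al N)).
  { intros N l.
    assert (H1 : is_series (fun k => u (S N + k)%nat l) (Cminus (B l) (sum_n (fun e => u e l) N))).
    { apply (is_series_incr_n (fun e => u e l) (S N)). lia. simpl pred.
      match goal with |- is_series _ ?L => replace L with (B l) end. apply Hcol.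
      change (B l = Cplus (Cminus (B l) (sum_n (fun e => u e l) N)) (sum_n (fun e => u e l) N)).
      unfold Cminus. ring. }
    assert (H2 : is_series (fun k => al (S N + k)%nat) (Sa - sum_n al N)).
    { apply (is_series_incr_n al (S N)). lia. simpl pred.
      match goal with |- is_series _ ?L => replace L with Sa end. exact HSa.
      change (Sa = (Sa - sum_n al N) + sum_n al N). ring. }
    apply (series_norm _ _ (fun k => be l * al (S N + k)%nat) _ H1).
    - apply (@is_series_scal R_AbsRing R_NormedModule (be l)). exact H2.
    - intros k. rewrite Rmult_comm. apply Hu. }
  apply conv_norm with (B := fun N => Sb * (Sa - sum_n al N)).
  - intros N.
    assert (H3 : is_series (fun l => Cminus (B l) (sum_n (fun e => u e l) N))
                  (Cminus S0 (sum_n (fun e => Csum (u e)) N))).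
    { exact (is_series_minus _ _ _ _ HBs (Hfin N)). }
    rewrite Cmod_minus_sym.
    apply (series_norm _ _ (fun l => be l * (Sa - sum_n al N)) _ H3).
    + apply is_series_scal_r. exact HSb.
    + apply Htail.
  - replace 0 with (Sb * (Sa - Sa)) by ring. apply (is_lim_seq_scal_l _ Sb (Sa - Sa)).
    apply is_lim_seq_minus'. apply is_lim_seq_const. apply series_lim; exact HSa.
Qed.

Lemma Rpower_half (q : R) (n : nat) : 0 < q -> Rpower q (INR n / 2) = sqrt q ^ n.
Proof.
  intros Hq. replace (INR n / 2) with (/ 2 * INR n) by (field).
  rewrite <- Rpower_mult, Rpower_sqrt by exact Hq. apply Rpower_pow. apply sqrt_lt_R0; exact Hq.
Qed.

Lemma qpochR_pos (q : R) (k : nat) : 0 < q < 1 -> 0 < qpochR q q k.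
Proof.
  intros Hq. induction k. simpl; lra. simpl. apply Rmult_lt_0_compat. exact IHk.
  generalize (pow_lt1 q k Hq). simpl. intros. lra.
Qed.

Lemma qfact_pos (q : R) (k : nat) : 0 < q < 1 -> 0 < qfact q k.
Proof. intros Hq. unfold qfact. apply Rdiv_lt_0_compat. apply qpochR_pos; exact Hq. apply pow_lt; lra. Qed.

Theorem lemma6p6 (q gamma s : R) (g : R -> C) (h : C -> C) :
  0 < q < 1 -> 0 < gamma -> 0 < s < / sqrt q ->
  in_Ms q s h ->
  in_Iinf q gamma g ->
  (forall t : C, Cmod t <= / ((1 - q) * sqrt q * s) ->
     ex_series (fun k => Cmod (qmoment_series_term q gamma g t k))) ->
  (forall x : C, in_strip x -> ex_series (fun e => Cmod (qconv_term q gamma g h x e))) /\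
  in_Ms q s (qconv q gamma g h).
Proof.
  intros Hq Hgam Hs0 [a [Cst [HC [Ha Hh]]]] Hgi Hmom.
  assert (Hs : 0 < s) by lra.
  assert (Hr : 0 < sqrt q) by (apply sqrt_lt_R0; lra).
  assert (Hsq : s * s * q < 1).
  { assert (H1 : s * sqrt q < 1).
    { apply Rmult_lt_reg_r with (/ sqrt q). apply Rinv_0_lt_compat; lra.
      rewrite Rmult_assoc, Rinv_r by lra. lra. }
    assert (Hqq : sqrt q * sqrt q = q) by (apply sqrt_sqrt; lra).
    assert (0 < s * sqrt q) by (apply Rmult_lt_0_compat; lra).
    assert (E : (s * sqrt q) * (s * sqrt q) = s * s * (sqrt q * sqrt q)) by ring.
    rewrite Hqq in E. nra. }
  assert (HaW : forall l, Cmod (a l) <= Cst * W q s l).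
  { intros l. generalize (Ha l). rewrite Rpower_half by lra. unfold W. intros H. rewrite <- Rmult_assoc. exact H. }
  assert (HhR : forall y, in_strip y -> h y = Cmult (PS a y) (EE q y)) by (intros y Hy; exact (Hh y Hy)).
  set (m := fun e => Cdiv (Cmult (RtoC ((-1) ^ e)) (qmoment q gamma g e)) (RtoC (qfact q e))).
  set (T := TT q s).
  assert (HT : 0 < T) by (apply TT_pos; lra).
  set (al := fun e => Cmod (m e) * T ^ e).
  assert (Hal0 : forall e, 0 <= al e).
  { intros e. unfold al. apply Rmult_le_pos. apply Cmod_ge_0. apply pow_le; lra. }
  assert (Hal : ex_series al).
  { apply (ex_series_ext (fun k => Cmod (qmoment_series_term q gamma g (RtoC T) k))).
    - intros k. match goal with |- ?x = ?y => change (@eq R x y) end. unfold qmoment_series_term, al, m.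
      assert (Hf : RtoC (qfact q k) <> RtoC 0) by (apply RtoC_nz; generalize (qfact_pos q k Hq); lra).
      rewrite !Cmod_div by exact Hf. rewrite !Cmod_mult, Cmod_pow, !Cmod_R, pow_1_abs.
      rewrite (Rabs_pos_eq T) by lra. field. apply Rgt_not_eq. apply Rabs_pos_lt.
      generalize (qfact_pos q k Hq); lra.
    - apply Hmom. rewrite Cmod_R, Rabs_pos_eq by lra. unfold T, TT. lra. }
  destruct Hal as [Sa HSa].
  set (V := VV q).
  assert (HV : 0 < V) by apply exp_pos.
  assert (HDn : forall e l, Cmod (Dn q e a l) <= (Cst * T ^ e * V) * W q s l).
  { apply Dn_boundW; auto; lra. }
  assert (HK : forall e, 0 <= Cst * T ^ e * V).
  { intros e. apply Rmult_le_pos; [apply Rmult_le_pos|]; try lra. apply pow_le; lra. }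
  assert (Hrep : forall e x, in_strip x -> qderiv_n q e h x = Cmult (PS (Dn q e a) x) (EE q x)).
  { intros e x Hx. apply (qderiv_n_rep q s Cst); auto; lra. }
  assert (Hterm : forall x e, in_strip x -> qconv_term q gamma g h x e = Cmult (m e) (Cmult (PS (Dn q e a) x) (EE q x))).
  { intros x e Hx. unfold qconv_term. rewrite (Hrep e x Hx). reflexivity. }
  split.
  - intros x Hx.
    apply (ex_series_le (fun e => Cmod (qconv_term q gamma g h x e)) (fun e => al e * (Cst * V * SW q s (Cmod x) * Cmod (EE q x)))).
    + intros e. change (norm (Cmod (qconv_term q gamma g h x e))) with (Rabs (Cmod (qconv_term q gamma g h x e))).
      rewrite Rabs_pos_eq by apply Cmod_ge_0. rewrite Hterm by exact Hx.
      rewrite !Cmod_mult. unfold al.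
      generalize (PS_norm q s (Cst * T ^ e * V) (Dn q e a) x Hq Hs (HDn e)). intros H.
      assert (0 <= Cmod (m e)) by apply Cmod_ge_0. assert (0 <= Cmod (EE q x)) by apply Cmod_ge_0.
      replace (Cmod (m e) * T ^ e * (Cst * V * SW q s (Cmod x) * Cmod (EE q x)))
        with (Cmod (m e) * ((Cst * T ^ e * V * SW q s (Cmod x)) * Cmod (EE q x))) by ring.
      apply Rmult_le_compat_l. exact H0. apply Rmult_le_compat_r. exact H1. exact H.
    + apply ex_series_scal_r. eexists; exact HSa.
  - set (cf := fun l => Csum (fun e => Cmult (m e) (Dn q e a l))).
    assert (Hub : forall e l, Cmod (Cmult (m e) (Dn q e a l)) <= al e * (Cst * V * W q s l)).
    { intros e l. rewrite Cmod_mult. unfold al.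
      replace (Cmod (m e) * T ^ e * (Cst * V * W q s l)) with (Cmod (m e) * ((Cst * T ^ e * V) * W q s l)) by ring.
      apply Rmult_le_compat_l. apply Cmod_ge_0. apply HDn. }
    assert (Hcol : forall l, is_series (fun e => Cmult (m e) (Dn q e a l)) (cf l)).
    { intros l. apply ex_is_Csum. apply ex_series_C_le with (b := fun e => al e * (Cst * V * W q s l)).
      intros e; apply Hub. apply ex_series_scal_r. eexists; exact HSa. }
    assert (Hcf : forall l, Cmod (cf l) <= Sa * (Cst * V * W q s l)).
    { intros l. apply (series_norm _ _ (fun e => al e * (Cst * V * W q s l)) _ (Hcol l)).
      apply is_series_scal_r. exact HSa. intros e; apply Hub. }
    exists cf, (Rabs Sa * Cst * V + 1). split; [|split].
    + assert (0 <= Rabs Sa * Cst * V) by (apply Rmult_le_pos; [apply Rmult_le_pos|]; try lra; apply Rabs_pos). lra.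
    + intros l. rewrite Rpower_half by lra. eapply Rle_trans; [apply Hcf|].
      assert (HW : 0 < W q s l) by (apply W_pos; lra). unfold W in HW |- *.
      assert (Sa <= Rabs Sa) by apply Rle_abs.
      assert (0 < Cst * V) by (apply Rmult_lt_0_compat; lra).
      set (w := s ^ l * sqrt q ^ (l * l)) in *.
      assert (Sa * (Cst * V * w) <= Rabs Sa * (Cst * V * w)) by (apply Rmult_le_compat_r; [apply Rmult_le_pos; lra|lra]).
      replace ((Rabs Sa * Cst * V + 1) * s ^ l * sqrt q ^ (l * l)) with (Rabs Sa * (Cst * V * w) + w) by (unfold w; ring).
      lra.
    + intros x Hx. unfold qconv. apply Csum_is.
      set (u := fun e l => Cmult (m e) (Cmult (Dn q e a l) (Cpow x l))).
      set (be := fun l => Cst * V * W q s l * Cmod x ^ l).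
      assert (Hbe : is_series be (Cst * V * SW q s (Cmod x))).
      { unfold be, SW. apply (is_series_ext (fun l => scal (Cst * V) (W q s l * Cmod x ^ l))).
        intros n. change (Cst * V * (W q s n * Cmod x ^ n) = Cst * V * W q s n * Cmod x ^ n). ring.
        apply (@is_series_scal R_AbsRing R_NormedModule). apply Series_correct. apply ex_series_W; try lra. apply Cmod_ge_0. }
      assert (Hu : forall e l, Cmod (u e l) <= al e * be l).
      { intros e l. unfold u, be. rewrite Cmod_mult, Cmod_mult, Cmod_pow.
        replace (Cmod (m e) * (Cmod (Dn q e a l) * Cmod x ^ l)) with (Cmod (Cmult (m e) (Dn q e a l)) * Cmod x ^ l)
          by (rewrite Cmod_mult; ring).
        replace (al e * (Cst * V * W q s l * Cmod x ^ l)) with (al e * (Cst * V * W q s l) * Cmod x ^ l) by ring.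
        apply Rmult_le_compat_r. apply pow_le, Cmod_ge_0. apply Hub. }
      assert (Hbe0 : forall l, 0 <= be l).
      { intros l. unfold be. apply Rmult_le_pos. apply Rmult_le_pos. apply Rmult_le_pos; lra.
        apply Rlt_le, W_pos; lra. apply pow_le, Cmod_ge_0. }
      generalize (fubini_prod u al be Sa _ Hu Hal0 Hbe0 HSa Hbe). intros HF.
      assert (E1 : forall e, Csum (u e) = Cmult (m e) (PS (Dn q e a) x)).
      { intros e. apply Csum_is. unfold u.
        exact (@is_series_scal C_AbsRing C_NormedModule (m e) _ _ (PS_is q s _ (Dn q e a) x Hq Hs (HDn e))). }
      assert (E2 : (fun l => Csum (fun e => u e l)) = (fun l => Cmult (cf l) (Cpow x l))).
      { apply functional_extensionality. intros l. apply Csum_is.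
        apply (is_series_ext (fun e => scal (Cpow x l) (Cmult (m e) (Dn q e a l)))).
        - intros e. unfold u. change (Cmult (Cpow x l) (Cmult (m e) (Dn q e a l)) = Cmult (m e) (Cmult (Dn q e a l) (Cpow x l))). ring.
        - replace (Cmult (cf l) (Cpow x l)) with (Cmult (Cpow x l) (cf l)) by ring.
          exact (@is_series_scal C_AbsRing C_NormedModule (Cpow x l) _ _ (Hcol l)). }
      rewrite E2 in HF.
      apply (is_series_ext (fun e => scal (EE q x) (Csum (u e)))).
      * intros e. rewrite E1, Hterm by exact Hx. change (Cmult (EE q x) (Cmult (m e) (PS (Dn q e a) x)) = Cmult (m e) (Cmult (PS (Dn q e a) x) (EE q x))). ring.
      * change (is_series (fun e => scal (EE q x) (Csum (u e))) (Cmult (PS cf x) (EE q x))).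
        replace (Cmult (PS cf x) (EE q x)) with (Cmult (EE q x) (PS cf x)) by ring.
        exact (@is_series_scal C_AbsRing C_NormedModule (EE q x) _ _ HF).
Qed.
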